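(* Let $u$ and $v$ be two prime words such that $u\le_{lex}v$, and let $\alpha$ and $\beta$ be two non-zero ordinals. Then $u^\alpha v^\beta=w^\gamma$ for some prime word $w$ and some ordinal $\gamma$, where either $w=v$ and $\gamma\in\{\beta,\alpha+\beta\}$, or $w=u^\alpha v^\beta$ and $\gamma=1$.
   Context: $A$ is a finite alphabet with a linear order $<_A$. Words are sequences of letters indexed by countable ordinals, $x^\alpha$ is the concatenation of $\alpha$ copies of $x$. A suffix of $x$ is $x[\gamma,|x|)$, proper if $0<\gamma<|x|$. Write $x<_{str}x'$ if there are letters $a<_Ab$ and words $y,z,z'$ with $x=yaz$, $x'=ybz'$; $x\le_{lex}x'$ iff $x$ is a prefix of $x'$ or $x<_{str}x'$. A word is primitive if $x=y^\alpha$ implies $\alpha=1$ and $y=x$; $w$ is prime if it is primitive and every proper suffix $z$ satisfies $w\le_{lex}z$. *)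

(* Defs.v *)
From Stdlib Require Import Arith Cantor Lia.
From mathcomp Require Import all_boot all_order zify.

Set Implicit Arguments.
Unset Strict Implicit.
Unset Printing Implicit Defensive.

(** Words are identified up to isomorphism ([word_iso]), which plays the role
  of equality of words. *)

Record word (A : Type) := Word {
  pos : Type;
  plt : pos -> pos -> Prop;
  plt_irr : forall i, ~ plt i i;
  plt_trans : forall i j k, plt i j -> plt j k -> plt i k;
  plt_total : forall i j, plt i j \/ i = j \/ plt j i;
  plt_wf : well_founded plt;
  pos_countable : exists f : pos -> nat, forall i j, f i = f j -> i = j;
  letter : pos -> A
}.

Arguments plt {A w} _ _.
Arguments letter {A w} _.

Definition tordinal := word unit.

Definition word_iso (A : Type) (x y : word A) : Prop :=
  exists (f : pos x -> pos y) (g : pos y -> pos x),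
    (forall i, g (f i) = i) /\ (forall j, f (g j) = j) /\
    (forall i j, plt i j <-> plt (f i) (f j)) /\
    (forall i, letter (f i) = letter i).

Definition empty_word (A : Type) : word A.
Proof.
refine (@Word A Empty_set (fun _ _ => False) _ _ _ _ _ _).
- intros; tauto.
- intros; tauto.
- by case.
- by move=> i; constructor.
- by exists (fun _ => 0) => i.
- by case.
Defined.

Definition letter_word (A : Type) (a : A) : word A.
Proof.
refine (@Word A unit (fun _ _ => False) _ _ _ _ _ (fun _ => a)).
- intros; tauto.
- intros; tauto.
- by move=> [] []; right; left.
- by move=> i; constructor.
- by exists (fun _ => 0) => [[] []].
Defined.

Definition ord_one : tordinal := letter_word tt.

Definition cat_lt (A : Type) (x y : word A) (p q : pos x + pos y) : Prop :=
  match p, q with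
  | inl i, inl j => plt i j
  | inl _, inr _ => True
  | inr _, inl _ => False
  | inr i, inr j => plt i j
  end.

Lemma cat_wf (A : Type) (x y : word A) : well_founded (cat_lt (x:=x) (y:=y)).
Proof.
have HL : forall i : pos x, Acc (@cat_lt A x y) (inl i).
  move=> i; elim: (plt_wf i) => {}i _ IH; constructor; case=> // j H; exact: IH.
case=> [i|i]; first exact: HL.
elim: (plt_wf i) => {}i _ IH; constructor; case=> [j|j] H; [exact: HL|exact: IH].
Qed.

Definition word_cat (A : Type) (x y : word A) : word A.
Proof.
refine (@Word A (pos x + pos y) (@cat_lt A x y) _ _ _ (@cat_wf A x y) _
  (fun p => match p with inl i => letter i | inr j => letter j end)).
- by case=> i /=; apply: plt_irr.
- case=> [i|i] [j|j] [k|k] //=; apply: plt_trans.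
- case=> [i|i] [j|j] /=; try by [left|right;right].
  + by case: (plt_total i j) => [H|[->|H]]; auto.
  + by case: (plt_total i j) => [H|[->|H]]; auto.
- case: (pos_countable x) => f Hf; case: (pos_countable y) => g Hg.
  exists (fun p => match p with inl i => 2 * f i | inr j => (2 * g j).+1 end).
  case=> [i|i] [j|j] H.
  + by rewrite (Hf i j) //; lia.
  + lia.
  + lia.
  + by rewrite (Hg i j) //; lia.
Defined.

(** Power [x^alpha]: concatenation of [alpha] copies of [x], i.e. positions
    [alpha x pos x] ordered lexicographically with the [alpha]-component first. *)
Definition pow_lt (A : Type) (x : word A) (al : tordinal) (p q : pos al * pos x) : Prop :=
  plt p.1 q.1 \/ (p.1 = q.1 /\ plt p.2 q.2).

Lemma pow_wf (A : Type) (x : word A) (al : tordinal) : well_founded (@pow_lt A x al).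
Proof.
case=> a i; elim: (plt_wf a) i => {}a _ IHa i.
elim: (plt_wf i) => {}i _ IHi; constructor; case=> b j [H|[/= E H]].
- exact: IHa.
- by rewrite /= in E; subst b; apply: IHi.
Qed.

Definition word_pow (A : Type) (x : word A) (al : tordinal) : word A.
Proof.
refine (@Word A (pos al * pos x) (@pow_lt A x al) _ _ _ (@pow_wf A x al) _
  (fun p => letter p.2)).
- by case=> a i [H|[_ H]]; apply: plt_irr H.
- case=> a i [b j] [c k] [H1|[/= E1 H1]] [H2|[/= E2 H2]]; rewrite /pow_lt /=.
  + by left; apply: plt_trans H2.
  + by left; rewrite -E2.
  + by left; rewrite E1.
  + by right; split; [rewrite E1 | apply: plt_trans H2].
- case=> a i [b j]; rewrite /pow_lt /=.
  case: (plt_total a b) => [H|[E|H]]; [by left; left| |by right; right; left].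
  subst b; case: (plt_total i j) => [H|[E|H]].
  + by left; right.
  + by right; left; subst.
  + by right; right; right.
- case: (pos_countable al) => f Hf; case: (pos_countable x) => g Hg.
  exists (fun p => Cantor.to_nat (f p.1, g p.2)).
  case=> a i [b j] H.
  have E := f_equal Cantor.of_nat H.
  rewrite !Cantor.cancel_of_to in E.
  by case: E => /Hf -> /Hg ->.
Defined.

Definition ord_add (al be : tordinal) : tordinal := word_cat al be.

Definition nonempty (A : Type) (x : word A) : Prop := inhabited (pos x).

Section Lex.
Variables (d : Order.disp_t) (A : orderType d).

Definition is_prefix (x x' : word A) : Prop :=
  exists z : word A, word_iso x' (word_cat x z).

Definition str_lt (x x' : word A) : Prop :=
  exists (y z z' : word A) (a b : A), (a < b)%O /\
    word_iso x (word_cat y (word_cat (letter_word a) z)) /\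
    word_iso x' (word_cat y (word_cat (letter_word b) z')).

Definition lex_le (x x' : word A) : Prop := is_prefix x x' \/ str_lt x x'.

(** [z] is a proper suffix of [x]: z = x[gamma,|x|) with 0 < gamma < |x|,
    i.e. x = y z with y and z both nonempty. *)
Definition proper_suffix (z x : word A) : Prop :=
  exists y : word A, nonempty y /\ nonempty z /\ word_iso x (word_cat y z).

Definition primitive (x : word A) : Prop :=
  forall (y : word A) (al : tordinal),
    word_iso x (word_pow y al) -> word_iso al ord_one /\ word_iso y x.

Definition prime_word (w : word A) : Prop :=
  primitive w /\ forall z : word A, proper_suffix z w -> lex_le w z.

End Lex.

(* Main.v *)
Require Import Defs.
From mathcomp Require Import all_boot all_order.
From Stdlib Require Import Classical ClassicalEpsilon ProofIrrelevance FunctionalExtensionality Inverse_Image Setoid Morphisms.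
Set Implicit Arguments.
Unset Strict Implicit.
Unset Printing Implicit Defensive.

Lemma mono_inj A (x y : word A) (f : pos x -> pos y) :
  (forall i j, plt i j -> plt (f i) (f j)) -> forall i j, f i = f j -> i = j.
Proof.
move=> H i j E; case: (plt_total i j) => [h|[h|h]] //.
- by have := H _ _ h; rewrite E => /plt_irr.
- by have := H _ _ h; rewrite E => /plt_irr.
Qed.

Lemma mono_refl A (x y : word A) (f : pos x -> pos y) :
  (forall i j, plt i j -> plt (f i) (f j)) -> forall i j, plt (f i) (f j) -> plt i j.
Proof.
move=> H i j E; case: (plt_total i j) => [h|[h|h]] //.
- by subst; move: E => /plt_irr.
- by have := plt_trans (H _ _ h) E => /plt_irr.
Qed.

Lemma iso_mono A (x y : word A) (f : pos x -> pos y) :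
  (forall i j, plt i j -> plt (f i) (f j)) ->
  (forall j, exists i, f i = j) ->
  (forall i, letter (f i) = letter i) -> word_iso x y.
Proof.
move=> Hm Hs Hl.
pose g j := proj1_sig (constructive_indefinite_description _ (Hs j)).
have fg : forall j, f (g j) = j.
  by move=> j; rewrite /g; case: constructive_indefinite_description.
exists f, g; split; [|split; [exact fg|split; [|exact Hl]]].
- by move=> i; apply: (mono_inj Hm); rewrite fg.
- move=> i j; split; [exact: Hm | exact: (@mono_refl _ _ _ _ Hm i j)].
Qed.

Lemma iso_refl A (x : word A) : word_iso x x.
Proof. by apply: (@iso_mono _ _ _ id) => // j; exists j. Qed.

Lemma iso_sym A (x y : word A) : word_iso x y -> word_iso y x.
Proof.
case=> f [g [gf [fg [m l]]]].
apply: (@iso_mono _ _ _ g).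
- by move=> i j h; rewrite m !fg.
- by move=> j; exists (f j).
- by move=> j; rewrite -{2}(fg j) l.
Qed.

Lemma iso_trans A (x y z : word A) : word_iso x y -> word_iso y z -> word_iso x z.
Proof.
case=> f [g [gf [fg [m l]]]]; case=> f' [g' [gf' [fg' [m' l']]]].
apply: (@iso_mono _ _ _ (fun i => f' (f i))).
- by move=> i j h; rewrite -m' -m.
- by move=> k; exists (g (g' k)); rewrite fg fg'.
- by move=> i; rewrite l' l.
Qed.

Lemma unit_eq (a b : unit) : a = b. Proof. by case: a; case: b. Qed.

Lemma cat_iso A (x x' y y' : word A) :
  word_iso x x' -> word_iso y y' -> word_iso (word_cat x y) (word_cat x' y').
Proof.
case=> f [g [gf [fg [m l]]]]; case=> f' [g' [gf' [fg' [m' l']]]].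
apply: (@iso_mono _ (word_cat x y) (word_cat x' y')
   (fun p => match p with inl i => inl (f i) | inr j => inr (f' j) end)).
- by case=> [i|i] [j|j] //= h; [rewrite -m|rewrite -m'].
- case=> [i|i]; [exists (inl (g i)) | exists (inr (g' i))]; by rewrite /= ?fg ?fg'.
- by case=> [i|i] /=.
Qed.

Lemma pow_iso A (x x' : word A) (al al' : tordinal) :
  word_iso x x' -> word_iso al al' -> word_iso (word_pow x al) (word_pow x' al').
Proof.
case=> f [g [gf [fg [m l]]]]; case=> f' [g' [gf' [fg' [m' l']]]].
apply: (@iso_mono _ (word_pow x al) (word_pow x' al')
   (fun p => (f' p.1, f p.2))).
- case=> a i [b j] [h|[/= E h]]; [left => /=; rewrite -m' // | right => /=; split; [by rewrite E | by rewrite -m]].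
- case=> a i; exists (g' a, g i); by rewrite /= fg fg'.
- by case=> a i /=.
Qed.

Lemma cat_assoc A (x y z : word A) :
  word_iso (word_cat (word_cat x y) z) (word_cat x (word_cat y z)).
Proof.
apply: (@iso_mono _ (word_cat (word_cat x y) z) (word_cat x (word_cat y z))
   (fun p => match p with inl (inl i) => inl i | inl (inr j) => inr (inl j)
               | inr k => inr (inr k) end)).
- by case=> [[i|i]|i] [[j|j]|j].
- case=> [i|[i|i]]; [exists (inl (inl i)) | exists (inl (inr i)) | exists (inr i)]; done.
- by case=> [[i|i]|i].
Qed.

Lemma iso_empty A (z : word A) : ~ nonempty z -> word_iso z (empty_word A).
Proof.
move=> hz; have F : pos z -> False by move=> i; apply: hz; constructor.
apply: (@iso_mono _ _ _ (fun i => match F i with end)).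
- by move=> i; case: (F i).
- by case.
- by move=> i; case: (F i).
Qed.

Lemma cat_empty_l A (x z : word A) : ~ nonempty z -> word_iso (word_cat z x) x.
Proof.
move=> hz; have F : pos z -> False by move=> i; apply: hz; constructor.
apply: (@iso_mono _ (word_cat z x) x
   (fun p => match p with inl i => match F i with end | inr j => j end)).
- by case=> [i|i] [j|j] //; case: (F i).
- by move=> j; exists (inr j).
- by case=> [i|i] //; case: (F i).
Qed.

Lemma cat_empty_r A (x z : word A) : ~ nonempty z -> word_iso (word_cat x z) x.
Proof.
move=> hz; have F : pos z -> False by move=> i; apply: hz; constructor.
apply: (@iso_mono _ (word_cat x z) x
   (fun p => match p with inr i => match F i with end | inl j => j end)).
- by case=> [i|i] [j|j] //; case: (F i) || case: (F j).
- by move=> j; exists (inl j).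
- by case=> [i|i] //; case: (F i).
Qed.

Lemma ne_iso A (x y : word A) : word_iso x y -> nonempty x -> nonempty y.
Proof. by case=> f _ [i]; constructor; exact: f i. Qed.

Lemma ne_catl A (x y : word A) : nonempty x -> nonempty (word_cat x y).
Proof. by case=> i; constructor; exact: inl i. Qed.
Lemma ne_catr A (x y : word A) : nonempty y -> nonempty (word_cat x y).
Proof. by case=> i; constructor; exact: inr i. Qed.
Lemma ne_cat_inv A (x y : word A) : nonempty (word_cat x y) -> nonempty x \/ nonempty y.
Proof. by case=> [[i|i]]; [left|right]; constructor. Qed.
Lemma ne_pow A (x : word A) al : nonempty x -> nonempty al -> nonempty (word_pow x al).
Proof. by case=> i [a]; constructor; exact: (a, i). Qed.
Lemma ne_pow_inv A (x : word A) al : nonempty (word_pow x al) -> nonempty x /\ nonempty al.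
Proof. by case=> [[a i]]; split; constructor. Qed.
Lemma ne_letter A (a : A) : nonempty (letter_word a).
Proof. by constructor; exact: tt. Qed.
Lemma ne_one : nonempty ord_one.
Proof. exact: ne_letter. Qed.

Lemma pow_add A (x : word A) al be :
  word_iso (word_pow x (ord_add al be)) (word_cat (word_pow x al) (word_pow x be)).
Proof.
apply: (@iso_mono _ (word_pow x (ord_add al be)) (word_cat (word_pow x al) (word_pow x be))
   (fun p => match p.1 with inl a => inl (a, p.2) | inr b => inr (b, p.2) end)).
- by case=> [[a|a] i] [[b|b] j] [h|[/= E h]] //=; try (by left); case: E => E; subst; right.
- case=> [[a i]|[a i]]; [exists (inl a, i) | exists (inr a, i)]; done.
- by case=> [[a|a] i].
Qed.

Lemma pow_one A (x : word A) : word_iso (word_pow x ord_one) x.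
Proof.
apply: (@iso_mono _ (word_pow x ord_one) x (fun p => p.2)).
- by case=> a i [b j] [h|[/= E h]] //.
- by move=> j; exists (tt, j).
- by case.
Qed.

Lemma pow_empty A (x : word A) al : ~ nonempty al -> ~ nonempty (word_pow x al).
Proof. by move=> h /ne_pow_inv []. Qed.

Lemma pow_empty_base A (x : word A) al : ~ nonempty x -> ~ nonempty (word_pow x al).
Proof. by move=> h /ne_pow_inv []. Qed.

Lemma sig_eq (T : Type) (P : T -> Prop) (a b : {x | P x}) : proj1_sig a = proj1_sig b -> a = b.
Proof. case: a => x hx; case: b => y hy /= E; subst; f_equal; apply: proof_irrelevance. Qed.

Definition sub A (x : word A) (P : pos x -> Prop) : word A.
Proof.
refine (@Word A {i : pos x | P i} (fun a b => plt (proj1_sig a) (proj1_sig b)) _ _ _ _ _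
  (fun a => letter (proj1_sig a))).
- by move=> [i hi] /=; apply: plt_irr.
- move=> [i hi] [j hj] [k hk] /=; apply: plt_trans.
- move=> a b; case: (plt_total (proj1_sig a) (proj1_sig b)) => [h|[h|h]];
    [left|right;left|right;right] => //; exact: sig_eq.
- apply: (wf_inverse_image _ _ plt (fun a => proj1_sig a)); exact: plt_wf.
- case: (pos_countable x) => f hf; exists (fun a => f (proj1_sig a)) => a b /hf; exact: sig_eq.
Defined.
Arguments sub [A] x P.

Definition ple A (x : word A) (i j : pos x) := plt i j \/ i = j.

Lemma wf_min A (x : word A) (P : pos x -> Prop) :
  (exists i, P i) -> exists i, P i /\ forall j, P j -> ple i j.
Proof.
move=> [i0 h0]; apply: NNPP => N.
suff : forall i, ~ P i by move/(_ i0).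
move=> i; elim: (plt_wf i) => {}i _ IH hi.
apply: N; exists i; split => // j hj.
case: (plt_total i j) => [h|[h|h]]; [by left|by right|].
by case: (IH j h hj).
Qed.

Lemma selfmap A (x : word A) (f : pos x -> pos x) :
  (forall i j, plt i j -> plt (f i) (f j)) -> forall i, ~ plt (f i) i.
Proof.
move=> H i; elim: (plt_wf i) => {}i _ IH h.
exact: (IH _ h (H _ _ h)).
Qed.

Lemma no_absorb A (x P Z : word A) :
  word_iso x (word_cat P (word_cat x Z)) -> nonempty Z -> False.
Proof.
move=> /iso_sym [g [f [fg [gf [m l]]]]] [z0].
pose h i := g (inr (inl i)).
have hm : forall i j, plt i j -> plt (h i) (h j).
  by move=> i j hij; rewrite /h -m /=.
have H := @selfmap _ _ _ hm (g (inr (inr z0))); apply: H.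
by rewrite /h -m.
Qed.

Lemma no_absorb1 A (x Z : word A) : word_iso x (word_cat x Z) -> nonempty Z -> False.
Proof.
move=> H; apply: (@no_absorb _ x (empty_word A)).
apply: (iso_trans H); apply: iso_sym; apply: cat_empty_l; by case.
Qed.

Lemma sub_ext A (x : word A) (P Q : pos x -> Prop) :
  (forall i, P i <-> Q i) -> word_iso (sub x P) (sub x Q).
Proof.
move=> H.
apply: (@iso_mono _ (sub x P) (sub x Q) (fun a => exist _ (proj1_sig a) (proj1 (H _) (proj2_sig a)))).
- by [].
- move=> b; exists (exist _ (proj1_sig b) (proj2 (H _) (proj2_sig b))); exact: sig_eq.
- by [].
Qed.

Lemma sub_T A (x : word A) (P : pos x -> Prop) : (forall i, P i) -> word_iso (sub x P) x.
Proof.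
move=> H; apply: (@iso_mono _ (sub x P) x (fun a => proj1_sig a)) => //.
by move=> j; exists (exist _ j (H j)).
Qed.

Lemma sub_transport A (x y : word A) (f : pos x -> pos y) (g : pos y -> pos x) :
  (forall i, g (f i) = i) -> (forall j, f (g j) = j) ->
  (forall i j, plt i j <-> plt (f i) (f j)) -> (forall i, letter (f i) = letter i) ->
  forall P, word_iso (sub x P) (sub y (fun j => P (g j))).
Proof.
move=> gf fg m l P.
apply: (@iso_mono _ (sub x P) (sub y (fun j => P (g j)))
   (fun a => exist _ (f (proj1_sig a)) (eq_rect_r P (proj2_sig a) (gf _)))).
- by move=> a b /= h; rewrite -m.
- move=> b; exists (exist _ (g (proj1_sig b)) (proj2_sig b)); apply: sig_eq => /=; exact: fg.
- by move=> a /=.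
Qed.

Lemma sub_flatten A (x : word A) (D : pos x -> Prop) (R : pos x -> Prop) :
  word_iso (sub (sub x D) (fun b => R (proj1_sig b))) (sub x (fun i => D i /\ R i)).
Proof.
apply: (@iso_mono _ (sub (sub x D) (fun b => R (proj1_sig b))) (sub x (fun i => D i /\ R i))
   (fun b => exist _ (proj1_sig (proj1_sig b)) (conj (proj2_sig (proj1_sig b)) (proj2_sig b)))).
- by [].
- move=> [i [hD hR]]; exists (exist _ (exist _ i hD) hR); exact: sig_eq.
- by [].
Qed.

Definition cut A (x : word A) (D : pos x -> Prop) := forall i j, plt i j -> D j -> D i.

Lemma cutg A (x : word A) (E D : pos x -> Prop) : cut D ->
  word_iso (sub x E) (word_cat (sub x (fun i => E i /\ D i)) (sub x (fun i => E i /\ ~ D i))).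
Proof.
move=> hD; apply: iso_sym.
apply: (@iso_mono _ (word_cat (sub x (fun i => E i /\ D i)) (sub x (fun i => E i /\ ~ D i))) (sub x E)
  (fun p => match p with inl a => exist _ (proj1_sig a) (proj1 (proj2_sig a))
                     | inr a => exist _ (proj1_sig a) (proj1 (proj2_sig a)) end)).
- case=> [[i [hEi hDi]]|[i [hEi hDi]]] [[j [hEj hDj]]|[j [hEj hDj]]] //= _.
  case: (plt_total i j) => [h|[h|h]] //; first by subst.
  by case: hDj; apply: hD hDi.
- move=> [i hE]; case: (classic (D i)) => h.
  + by exists (inl (exist _ i (conj hE h))); apply: sig_eq.
  + by exists (inr (exist _ i (conj hE h))); apply: sig_eq.
- by case=> [[i ?]|[i ?]].
Qed.

Lemma sub_point A (x : word A) (q : pos x) :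
  word_iso (sub x (fun j => j = q)) (letter_word (letter q)).
Proof.
apply: iso_sym.
apply: (@iso_mono _ (letter_word (letter q)) (sub x (fun j => j = q))
  (fun _ => exist _ q erefl)).
- by [].
- move=> [j E]; exists tt; exact: sig_eq.
- by [].
Qed.

Lemma ple_cut A (x : word A) (q : pos x) : cut (fun j => ple j q).
Proof. move=> i j h [h'|h']; left; [exact: plt_trans h h'|by rewrite -h']. Qed.
Lemma plt_cut A (x : word A) (q : pos x) : cut (fun j => plt j q).
Proof. move=> i j h h'; exact: plt_trans h h'. Qed.

Lemma split_le A (x : word A) (q : pos x) :
  word_iso (sub x (fun j => ple j q)) (word_cat (sub x (fun j => plt j q)) (letter_word (letter q))).
Proof.
apply: (iso_trans (@cutg _ x (fun j => ple j q) _ (@plt_cut _ x q))).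
apply: cat_iso.
- by apply: sub_ext => j; split => [[]|h] //; split => //; left.
- apply: (iso_trans _ (sub_point q)); apply: sub_ext => j; split.
  + by move=> [[h|h] h'].
  + by move=> ->; split; [right|apply: plt_irr].
Qed.

Lemma split3 A (x : word A) (q : pos x) :
  word_iso x (word_cat (sub x (fun j => plt j q))
                       (word_cat (letter_word (letter q)) (sub x (fun j => plt q j)))).
Proof.
apply: iso_trans (iso_sym (sub_T (fun _ => I))) _.
apply: (iso_trans (@cutg _ x (fun _ => True) _ (@plt_cut _ x q))).
apply: cat_iso.
- by apply: sub_ext => j; split => [[]|h].
- apply: (iso_trans (@cutg _ x _ _ (@ple_cut _ x q))).
  apply: cat_iso.
  + apply: (iso_trans _ (sub_point q)); apply: sub_ext => j; split.
    * by move=> [[_ h] [h'|h']].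
    * by move=> ->; split; [split => //; apply: plt_irr|right].
  + apply: sub_ext => j; split.
    * move=> [[_ h] h']; case: (plt_total j q) => [h1|[h1|h1]] //.
      by case: h'; right.
    * move=> h; split; [split => // h'|move=> [h'|h']].
      - by have := plt_trans h h' => /plt_irr.
      - by have := plt_trans h h' => /plt_irr.
      - by subst; move: h => /plt_irr.
Qed.

Definition isl A (x y : word A) (p : pos (word_cat x y)) := exists i, p = inl i.

Lemma isl_cut A (x y : word A) : cut (@isl A x y).
Proof. move=> [i|i] [j|j] //= _ [k E] //; by exists i. Qed.

Lemma sub_inl A (x y : word A) (E : pos (word_cat x y) -> Prop) :
  (forall i, E (inl i)) -> word_iso (sub (word_cat x y) (fun p => E p /\ isl p)) x.
Proof.
move=> hE; apply: iso_sym.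
apply: (@iso_mono _ x (sub (word_cat x y) (fun p => E p /\ isl p))
  (fun i => exist _ (inl i) (conj (hE i) (ex_intro _ i erefl)))) => //.
move=> [p hp]; case: (hp) => hE' [i E']; exists i; apply: sig_eq => /=; by rewrite E'.
Qed.

Lemma sub_inr A (x y : word A) (E : pos (word_cat x y) -> Prop) :
  (forall i, E (inr i)) -> word_iso (sub (word_cat x y) (fun p => E p /\ ~ isl p)) y.
Proof.
move=> hE; apply: iso_sym.
have H : forall i, ~ @isl A x y (inr i) by move=> i [j E'].
apply: (@iso_mono _ y (sub (word_cat x y) (fun p => E p /\ ~ isl p))
  (fun i => exist _ (inr i) (conj (hE i) (H i)))) => //.
move=> [[i|i] hp]; first by case: (proj2 hp); exists i.
by exists i; apply: sig_eq.
Qed.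

#[global] Instance iso_equiv A : Equivalence (@word_iso A).
Proof. split; [exact: iso_refl|exact: iso_sym|exact: iso_trans]. Qed.
#[global] Instance cat_proper A : Proper (@word_iso A ==> @word_iso A ==> @word_iso A) (@word_cat A).
Proof. move=> x x' h y y' h'; exact: cat_iso. Qed.
#[global] Instance pow_proper A : Proper (@word_iso A ==> @word_iso unit ==> @word_iso A) (@word_pow A).
Proof. move=> x x' h y y' h'; exact: pow_iso. Qed.
#[global] Instance ne_proper A : Proper (@word_iso A ==> iff) (@nonempty A).
Proof. move=> x y h; split; apply: ne_iso => //; exact: iso_sym. Qed.
#[global] Instance ord_add_proper : Proper (@word_iso unit ==> @word_iso unit ==> @word_iso unit) ord_add.
Proof. move=> x x' h y y' h'; exact: cat_iso. Qed.

#[global] Hint Resolve iso_refl : core.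

Definition pre A (x y : word A) := exists z, word_iso y (word_cat x z).

#[global] Instance pre_proper A : Proper (@word_iso A ==> @word_iso A ==> iff) (@pre A).
Proof.
move=> x x' h y y' h'; split => -[z hz]; exists z.
- by rewrite -h -h'.
- by rewrite h h'.
Qed.

Lemma levi_aux A (P1 S1 P2 S2 : word A) (f : pos (word_cat P1 S1) -> pos (word_cat P2 S2)) g :
  (forall i, g (f i) = i) -> (forall j, f (g j) = j) ->
  (forall i j, plt i j <-> plt (f i) (f j)) -> (forall i, letter (f i) = letter i) ->
  (forall y, isl (g y) -> isl y) ->
  exists M, word_iso P2 (word_cat P1 M) /\ word_iso S1 (word_cat M S2).
Proof.
move=> gf fg m l C.
have T := sub_transport gf fg m l.
have gm : forall a b, plt a b -> plt (g a) (g b) by move=> a b h; rewrite m !fg.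
have cD : cut (fun y => isl (g y)).
  move=> a b h hb; apply: (@isl_cut _ P1 S1 _ (g b)) => //; exact: gm.
set Y := word_cat P2 S2.
exists (sub Y (fun y => (True /\ isl y) /\ ~ isl (g y))); split.
- rewrite -{1}(@sub_inl _ P2 S2 (fun _ => True)) //.
  rewrite (@cutg _ Y (fun y => True /\ isl y) _ cD).
  apply: cat_iso; last by [].
  apply: (iso_trans _ (@sub_inl _ P1 S1 (fun _ => True) (fun _ => I))).
  apply: iso_sym; rewrite T; apply: sub_ext => y; split; last by case.
  by move=> [_ h]; split; [split => //; apply: C|].
- apply: (iso_trans (iso_sym (@sub_inr _ P1 S1 (fun _ => True) (fun _ => I)))).
  rewrite T; apply: (iso_trans (@cutg _ Y (fun j => True /\ ~ isl (g j)) _ (@isl_cut _ P2 S2))).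
  apply: cat_iso.
  + by apply: sub_ext => y; split => -[[_ h1] h2].
  + apply: (iso_trans _ (@sub_inr _ P2 S2 (fun _ => True) (fun _ => I))).
    apply: sub_ext => y; split; first by case=> [[_ _] h].
    by move=> [_ h]; split => //; split => // /C.
Qed.

Lemma levi A (P1 S1 P2 S2 : word A) :
  word_iso (word_cat P1 S1) (word_cat P2 S2) ->
  exists M, (word_iso P2 (word_cat P1 M) /\ word_iso S1 (word_cat M S2)) \/
            (word_iso P1 (word_cat P2 M) /\ word_iso S2 (word_cat M S1)).
Proof.
case=> f [g [gf [fg [m l]]]].
case: (classic (forall y, isl (g y) -> isl y)) => C.
- by case: (levi_aux gf fg m l C) => M h; exists M; left.
- have C' : forall x, isl (f x) -> isl x.
    move=> x hx; apply: NNPP => nx; apply: C => y hy; apply: NNPP => ny.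
    case: x hx nx => [p|s] hx nx; first by apply: nx; exists p.
    case: hx => p E.
    case: y hy ny => [p'|s'] hy ny; first by apply: ny; exists p'.
    case: hy => p1 E1.
    have h1 : plt (g (inr s')) (inr s) by rewrite E1.
    move: h1; rewrite m fg E => /=; done.
  have m' : forall i j, plt i j <-> plt (g i) (g j) by move=> i j; rewrite m !fg.
  have l' : forall j, letter (g j) = letter j by move=> j; rewrite -{2}(fg j) l.
  by case: (levi_aux fg gf m' l' C') => M h; exists M; right.
Qed.

Lemma letter_cat_inv A (a : A) (M K : word A) :
  word_iso (letter_word a) (word_cat M K) -> nonempty M -> word_iso M (letter_word a) /\ ~ nonempty K.
Proof.
move=> H [m0].
have hK : ~ nonempty K.
  move=> [k0]; case: (iso_sym H) => g [f [fg [gf [mm l]]]].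
  have : g (inl m0) = g (inr k0) by case: (g (inl m0)); case: (g (inr k0)).
  by move/(f_equal f); rewrite !fg.
split => //.
by rewrite H cat_empty_r.
Qed.

Lemma first_letter_gen A (a : A) (Z M N : word A) :
  word_iso (word_cat (letter_word a) Z) (word_cat M N) -> nonempty M ->
  exists M', word_iso M (word_cat (letter_word a) M').
Proof.
move=> /levi [K [[h1 h2]|[h1 h2]]] hM.
- by exists K.
- case: (letter_cat_inv h1 hM) => h3 h4.
  by exists (empty_word A); rewrite h3 cat_empty_r //; case.
Qed.

Lemma first_letter A (a b : A) (Z Z' : word A) :
  word_iso (word_cat (letter_word a) Z) (word_cat (letter_word b) Z') -> a = b.
Proof.
case=> f [g [gf [fg [m l]]]].
case E: (f (inl tt)) => [[]|z].
- by have := l (inl tt); rewrite E.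
- case E2: (g (inl tt)) => [[]|z2].
  + by move: E2; move/(f_equal f); rewrite fg E.
  + have h : plt (inl tt : pos (word_cat (letter_word a) Z)) (g (inl tt)) by rewrite E2.
    by move: h; rewrite m fg E.
Qed.

Lemma R0 A (Y : word A) (a b : A) (Z Z' : word A) :
  word_iso (word_cat Y (word_cat (letter_word a) Z)) (word_cat Y (word_cat (letter_word b) Z')) -> a = b.
Proof.
move=> /levi [M [[h1 h2]|[h1 h2]]].
- case: (classic (nonempty M)) => hM; first by case: (no_absorb1 h1 hM).
  by apply: (@first_letter _ _ _ Z Z'); rewrite h2 cat_empty_l.
- case: (classic (nonempty M)) => hM; first by case: (no_absorb1 h1 hM).
  by apply: sym_eq; apply: (@first_letter _ _ _ Z' Z); rewrite h2 cat_empty_l.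
Qed.

Lemma pre_refl A (x : word A) : pre x x.
Proof. by exists (empty_word A); rewrite cat_empty_r //; case. Qed.
Lemma pre_cat A (x z : word A) : pre x (word_cat x z).
Proof. by exists z. Qed.
Lemma pre_trans A (x y z : word A) : pre x y -> pre y z -> pre x z.
Proof. by move=> [a ha] [b hb]; exists (word_cat a b); rewrite hb ha cat_assoc. Qed.
Lemma pre_antisym A (x y : word A) : pre x y -> pre y x -> word_iso x y.
Proof.
move=> [a ha] [b hb].
have H : word_iso x (word_cat x (word_cat a b)) by rewrite -cat_assoc -ha.
case: (classic (nonempty (word_cat a b))) => hn; first by case: (no_absorb1 H hn).
by rewrite ha cat_empty_r // => h; apply: hn; apply: ne_catl.
Qed.

Import Order.TTheory.
Local Open Scope order_scope.

#[global] Instance slt_proper d (A : orderType d) :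
  Proper (@word_iso A ==> @word_iso A ==> iff) (@str_lt d A).
Proof.
move=> x x' h y y' h'; split => -[Y [Z [Z' [a [b [hab [h1 h2]]]]]]];
  exists Y, Z, Z', a, b; split => //; split.
- by rewrite -h.
- by rewrite -h'.
- by rewrite h.
- by rewrite h'.
Qed.

Lemma slt_letters d (A : orderType d) (Y Z Z' : word A) (a b : A) : a < b ->
  str_lt (word_cat Y (word_cat (letter_word a) Z)) (word_cat Y (word_cat (letter_word b) Z')).
Proof. by move=> h; exists Y, Z, Z', a, b. Qed.

Lemma slt_catr d (A : orderType d) (x y z z' : word A) :
  str_lt x y -> str_lt (word_cat x z) (word_cat y z').
Proof.
move=> [Y [Z [Z' [a [b [hab [h1 h2]]]]]]].
exists Y, (word_cat Z z), (word_cat Z' z'), a, b; split => //; split.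
- by rewrite h1 !cat_assoc.
- by rewrite h2 !cat_assoc.
Qed.

Lemma slt_catr0 d (A : orderType d) (x y z' : word A) :
  str_lt x y -> str_lt x (word_cat y z').
Proof.
move=> h; have := @slt_catr _ _ x y (empty_word A) z' h.
by rewrite cat_empty_r //; case.
Qed.

Lemma slt_catl d (A : orderType d) (x y z : word A) :
  str_lt x y -> str_lt (word_cat z x) (word_cat z y).
Proof.
move=> [Y [Z [Z' [a [b [hab [h1 h2]]]]]]].
exists (word_cat z Y), Z, Z', a, b; split => //; split.
- by rewrite h1 !cat_assoc.
- by rewrite h2 !cat_assoc.
Qed.

Lemma slt_pre1 d (A : orderType d) (x y : word A) : str_lt x y -> pre y x -> False.
Proof.
move=> [Y [Z [Z' [a [b [hab [h1 h2]]]]]]] [w hw].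
have E : a = b.
  apply: (@R0 _ Y a b Z (word_cat Z' w)).
  by rewrite -h1 hw h2 !cat_assoc.
by move: hab; rewrite E ltxx.
Qed.

Lemma slt_pre2 d (A : orderType d) (x y : word A) : str_lt x y -> pre x y -> False.
Proof.
move=> [Y [Z [Z' [a [b [hab [h1 h2]]]]]]] [w hw].
have E : a = b.
  apply: (@R0 _ Y a b (word_cat Z w) Z').
  by rewrite -h2 hw h1 !cat_assoc.
by move: hab; rewrite E ltxx.
Qed.

Lemma slt_irr d (A : orderType d) (x : word A) : str_lt x x -> False.
Proof. move=> h; exact: (slt_pre1 h (pre_refl x)). Qed.

Lemma slt_trans d (A : orderType d) (x y z : word A) :
  str_lt x y -> str_lt y z -> str_lt x z.
Proof.
move=> [Y1 [Z1 [Z1' [a [b [hab [h1 h2]]]]]]] [Y2 [Z2 [Z2' [c [e [hce [h3 h4]]]]]]].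
have H : word_iso (word_cat Y1 (word_cat (letter_word b) Z1'))
                  (word_cat Y2 (word_cat (letter_word c) Z2)) by rewrite -h2 -h3.
case: (levi H) => M [[k1 k2]|[k1 k2]].
- case: (classic (nonempty M)) => hM.
  + case: (first_letter_gen k2 hM) => M' hM'.
    exists Y1, Z1, (word_cat M' (word_cat (letter_word e) Z2')), a, b; split => //; split => //.
    by rewrite h4 k1 hM' !cat_assoc.
  + have E : b = c by apply: (@first_letter _ _ _ Z1' Z2); rewrite k2 cat_empty_l.
    exists Y1, Z1, Z2', a, e; split; first by rewrite (lt_trans hab) // E.
    split => //; by rewrite h4 k1 (@cat_empty_r _ Y1 M hM).
- case: (classic (nonempty M)) => hM.
  + case: (first_letter_gen k2 hM) => M' hM'.
    exists Y2, (word_cat M' (word_cat (letter_word a) Z1)), Z2', c, e; split => //; split => //.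
    by rewrite h1 k1 hM' !cat_assoc.
  + have E : c = b by apply: (@first_letter _ _ _ Z2 Z1'); rewrite k2 cat_empty_l.
    exists Y2, Z1, Z2', a, e; split; first by rewrite (lt_trans hab) // -E.
    split => //; by rewrite h1 k1 (@cat_empty_r _ Y2 M hM).
Qed.

Lemma iso_maps A (x y : word A) : word_iso x y ->
  exists (f : pos x -> pos y) (g : pos y -> pos x),
    (forall i, g (f i) = i) /\ (forall j, f (g j) = j) /\
    (forall i j, plt i j <-> plt (f i) (f j)) /\ (forall i, letter (f i) = letter i) /\
    (forall i j, plt i j <-> plt (g i) (g j)).
Proof.
case=> f [g [gf [fg [m l]]]]; exists f, g; do 4 (split => //).
by move=> i j; rewrite m !fg.
Qed.

Definition top A (x : word A) (i : pos x) : pos (sub x (fun k => ple k i)) :=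
  exist _ i (or_intror erefl).

Lemma max_to_max A (x y : word A) (i : pos x) (j : pos y)
  (f : pos (sub x (fun k => ple k i)) -> pos (sub y (fun k => ple k j))) g :
  (forall a, g (f a) = a) -> (forall b, f (g b) = b) -> (forall a b, plt a b <-> plt (f a) (f b)) ->
  f (top i) = top j.
Proof.
move=> gf fg m.
apply: sig_eq => /=.
case: (proj2_sig (f (top i))) => // h.
exfalso.
have h1 : plt (f (top i)) (top j) by [].
rewrite -[top j]fg -m in h1.
have h1' : plt i (proj1_sig (g (top j))) := h1.
case: (proj2_sig (g (top j))) => h2.
- by have := plt_trans h1' h2 => /plt_irr.
- by move: h1; rewrite /= h2 => /plt_irr.
Qed.

Definition Sij A (x y : word A) (i : pos x) (j : pos y) :=
  word_iso (sub x (fun k => ple k i)) (sub y (fun k => ple k j)).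

Lemma Sij_sym A (x y : word A) i j : @Sij A x y i j -> Sij j i.
Proof. exact: iso_sym. Qed.

Lemma Sij_letter A (x y : word A) i j : @Sij A x y i j -> letter i = letter j.
Proof.
case=> f [g [gf [fg [m l]]]].
have := l (top i); rewrite (max_to_max gf fg m) /=; done.
Qed.

Lemma ple_rigid_lt A (y : word A) (j j' : pos y) :
  plt j j' -> word_iso (sub y (fun k => ple k j)) (sub y (fun k => ple k j')) -> False.
Proof.
move=> hjj H.
have C := @cutg _ y (fun k => ple k j') _ (@ple_cut _ y j).
have E1 : word_iso (sub y (fun k => ple k j' /\ ple k j)) (sub y (fun k => ple k j)).
  apply: sub_ext => k; split; first by case.
  move=> h; split => //; left; case: h => [h|->] //; exact: plt_trans h hjj.
rewrite E1 in C.
apply: (@no_absorb1 _ _ _ (iso_trans H C)).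
constructor; exists j'; split; first by right.
case=> [h|h]; first by have := plt_trans h hjj => /plt_irr.
by subst; move: hjj => /plt_irr.
Qed.

Lemma ple_rigid A (y : word A) (j j' : pos y) :
  word_iso (sub y (fun k => ple k j)) (sub y (fun k => ple k j')) -> j = j'.
Proof.
move=> H; case: (plt_total j j') => [h|[h|h]] //.
- by case: (ple_rigid_lt h H).
- by case: (ple_rigid_lt h (iso_sym H)).
Qed.

Lemma Sij_fun A (x y : word A) i j j' : @Sij A x y i j -> Sij i j' -> j = j'.
Proof. move=> h h'; apply: ple_rigid; exact: iso_trans (iso_sym h) h'. Qed.

Lemma ple_sub A (x : word A) (P : pos x -> Prop) (a b : pos (sub x P)) :
  ple a b <-> ple (proj1_sig a) (proj1_sig b).
Proof.
split => -[h|h]; [by left|by right; rewrite h|by left|by right; apply: sig_eq].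
Qed.

Lemma Sij_restr A (x y : word A) i j i' : @Sij A x y i j -> plt i' i ->
  exists j', plt j' j /\ Sij i' j'.
Proof.
move=> H hi.
case: (iso_maps H) => f [g [gf [fg [m [l m']]]]].
have hmm := max_to_max gf fg m.
pose a := (exist _ i' (or_introl hi) : pos (sub x (fun k => ple k i))).
exists (proj1_sig (f a)); split.
  have : plt a (top i) by [].
  by rewrite m hmm.
rewrite /Sij.
have T := sub_transport gf fg m l (fun c => ple (proj1_sig c) i').
have E1 : word_iso (sub x (fun k => ple k i /\ ple k i')) (sub x (fun k => ple k i')).
  apply: sub_ext => k; split; first by case.
  move=> h; split => //; left; case: h => [h|->] //; exact: plt_trans h hi.
apply: (iso_trans (iso_sym E1)).
apply: (iso_trans (iso_sym (@sub_flatten _ x (fun k => ple k i) (fun k => ple k i')))).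
apply: (iso_trans T).
have E2 : word_iso (sub (sub y (fun k => ple k j)) (fun c => ple (proj1_sig (g c)) i'))
                   (sub (sub y (fun k => ple k j)) (fun c => ple (proj1_sig c) (proj1_sig (f a)))).
  apply: sub_ext => c.
  have -> : i' = proj1_sig (g (f a)) by rewrite gf.
  rewrite -!ple_sub; split => -[h|h].
  - by left; rewrite m'.
  - by right; rewrite -[c]fg h fg.
  - by left; rewrite -m'.
  - by right; rewrite h.
apply: (iso_trans E2).
apply: (iso_trans (@sub_flatten _ y (fun k => ple k j) (fun k => ple k (proj1_sig (f a))))).
apply: sub_ext => k; split; first by case.
move=> h; split => //; left; case: h => [h|->] //.
- apply: plt_trans h _; have : plt a (top i) by [].
  by rewrite m hmm.
- have : plt a (top i) by [].
  by rewrite m hmm.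
Qed.

Lemma Sij_mono A (x y : word A) i1 j1 i2 j2 : @Sij A x y i1 j1 -> Sij i2 j2 -> plt i1 i2 -> plt j1 j2.
Proof.
move=> h1 h2 hi; case: (Sij_restr h2 hi) => j' [hj h'].
by rewrite (Sij_fun h1 h').
Qed.

Lemma tri A (x y : word A) : pre x y \/ pre y x \/
  exists (Y Z Z' : word A) (a b : A), a <> b /\
    word_iso x (word_cat Y (word_cat (letter_word a) Z)) /\
    word_iso y (word_cat Y (word_cat (letter_word b) Z')).
Proof.
pose Dx i := exists j, @Sij A x y i j.
pose Ey j := exists i, @Sij A x y i j.
have cDx : cut Dx.
  move=> i' i h [j hs]; case: (Sij_restr hs h) => j' [_ h']; by exists j'.
have cEy : cut Ey.
  move=> j' j h [i hs]; case: (Sij_restr (Sij_sym hs) h) => i' [_ h']; exists i'; exact: Sij_sym.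
have Main : word_iso (sub x Dx) (sub y Ey).
  pose J (a : pos (sub x Dx)) := proj1_sig (constructive_indefinite_description _ (proj2_sig a)).
  have hJ : forall a, Sij (proj1_sig a) (J a).
    by move=> a; rewrite /J; case: constructive_indefinite_description.
  apply: (@iso_mono _ (sub x Dx) (sub y Ey) (fun a => exist _ (J a) (ex_intro _ (proj1_sig a) (hJ a)))).
  - move=> a b h /=; exact: Sij_mono (hJ a) (hJ b) h.
  - move=> [j [i hs]].
    exists (exist _ i (ex_intro _ j hs)); apply: sig_eq => /=.
    exact: (Sij_fun (hJ (exist _ i (ex_intro _ j hs))) hs).
  - by move=> a /=; rewrite -(Sij_letter (hJ a)).
case: (classic (forall i, Dx i)) => hx.
  left; exists (sub y (fun k => True /\ ~ Ey k)).
  rewrite -{1}(sub_T (fun _ : pos y => I)) (@cutg _ y _ _ cEy).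
  apply: cat_iso => //.
  rewrite -(sub_T hx) Main; apply: sub_ext => k; split => //; by case.
case: (classic (forall j, Ey j)) => hy.
  right; left; exists (sub x (fun k => True /\ ~ Dx k)).
  rewrite -{1}(sub_T (fun _ : pos x => I)) (@cutg _ x _ _ cDx).
  apply: cat_iso => //.
  rewrite -(sub_T hy) -Main; apply: sub_ext => k; split => //; by case.
right; right.
have [i0 [hi0 mi0]] : exists i0, ~ Dx i0 /\ forall i, ~ Dx i -> ple i0 i.
  apply: wf_min; exact: not_all_ex_not.
have [j0 [hj0 mj0]] : exists j0, ~ Ey j0 /\ forall j, ~ Ey j -> ple j0 j.
  apply: wf_min; exact: not_all_ex_not.
have eD : forall i, Dx i <-> plt i i0.
  move=> i; split => h.
  - case: (plt_total i i0) => [h'|[h'|h']] //; first by subst.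
    by case: hi0; apply: cDx h' h.
  - apply: NNPP => nd; case: (mi0 _ nd) => h'.
    + by have := plt_trans h h' => /plt_irr.
    + by subst; move: h => /plt_irr.
have eE : forall j, Ey j <-> plt j j0.
  move=> j; split => h.
  - case: (plt_total j j0) => [h'|[h'|h']] //; first by subst.
    by case: hj0; apply: cEy h' h.
  - apply: NNPP => nd; case: (mj0 _ nd) => h'.
    + by have := plt_trans h h' => /plt_irr.
    + by subst; move: h => /plt_irr.
have M2 : word_iso (sub x (fun k => plt k i0)) (sub y (fun k => plt k j0)).
  rewrite -(sub_ext eD) -(sub_ext eE); exact: Main.
case: (classic (letter i0 = letter j0)) => hl.
  exfalso; apply: hi0; exists j0; rewrite /Sij.
  by rewrite !split_le M2 hl.
exists (sub x (fun k => plt k i0)), (sub x (fun k => plt i0 k)), (sub y (fun k => plt j0 k)),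
  (letter i0), (letter j0); split => //; split.
- exact: split3.
- by rewrite M2; exact: split3.
Qed.

Lemma tri_ord (al be : tordinal) : pre al be \/ pre be al.
Proof.
case: (tri al be) => [h|[h|[Y [Z [Z' [a [b [h _]]]]]]]]; [by left|by right|].
by case: h; case: a; case: b.
Qed.


Lemma pre_pf1 A (y : word A) (ga : tordinal) (k : pos ga) (i : pos y)
  (q : pos (word_pow y (sub ga (fun k' => plt k' k)))) :
  @plt _ (word_pow y ga) (proj1_sig q.1, q.2) (k, i).
Proof. by left; exact: (proj2_sig q.1). Qed.

Lemma pre_pf2 A (y : word A) (ga : tordinal) (k : pos ga) (i : pos y)
  (q : pos (sub y (fun i' => plt i' i))) :
  @plt _ (word_pow y ga) (k, proj1_sig q) (k, i).
Proof. by right; split => //; exact: (proj2_sig q). Qed.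

Lemma pow_prefix A (y : word A) (ga : tordinal) (k : pos ga) (i : pos y) :
  word_iso (sub (word_pow y ga) (fun p => plt p (k, i)))
           (word_cat (word_pow y (sub ga (fun k' => plt k' k))) (sub y (fun i' => plt i' i))).
Proof.
apply: iso_sym.
apply: (@iso_mono _ (word_cat (word_pow y (sub ga (fun k' => plt k' k))) (sub y (fun i' => plt i' i)))
  (sub (word_pow y ga) (fun p => plt p (k, i)))
  (fun p => match p with inl q => exist _ (proj1_sig q.1, q.2) (@pre_pf1 _ y ga k i q)
                       | inr q => exist _ (k, proj1_sig q) (@pre_pf2 _ y ga k i q) end)).
- case=> [[a i1]|i1] [[b i2]|i2] //= h.
  + case: h => [h|[/= h1 h2]]; [by left|right; split => //=; by rewrite h1].
  + by left; exact: (proj2_sig a).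
  + by right.
- move=> [[k' i'] h].
  case: (h) => [h1|[/= h1 h2]].
  + exists (inl (exist _ k' h1, i')); exact: sig_eq.
  + subst; exists (inr (exist _ i' h2)); exact: sig_eq.
- by case.
Qed.

Lemma suf_pf1 A (y : word A) (ga : tordinal) (k : pos ga) (i : pos y)
  (q : pos (sub y (fun i' => ~ plt i' i))) :
  ~ @plt _ (word_pow y ga) (k, proj1_sig q) (k, i).
Proof. by move=> [/plt_irr|[_ /= h]] //; exact: (proj2_sig q). Qed.

Lemma suf_pf2 A (y : word A) (ga : tordinal) (k : pos ga) (i : pos y)
  (q : pos (word_pow y (sub ga (fun k' => plt k k')))) :
  ~ @plt _ (word_pow y ga) (proj1_sig q.1, q.2) (k, i).
Proof.
have hk : plt k (proj1_sig q.1) := proj2_sig q.1.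
move=> [/= h|[/= h _]].
- by have := plt_trans hk h => /plt_irr.
- by move: hk; rewrite h => /plt_irr.
Qed.

Lemma pow_suffix A (y : word A) (ga : tordinal) (k : pos ga) (i : pos y) :
  word_iso (sub (word_pow y ga) (fun p => ~ plt p (k, i)))
           (word_cat (sub y (fun i' => ~ plt i' i)) (word_pow y (sub ga (fun k' => plt k k')))).
Proof.
apply: iso_sym.
apply: (@iso_mono _ (word_cat (sub y (fun i' => ~ plt i' i)) (word_pow y (sub ga (fun k' => plt k k'))))
  (sub (word_pow y ga) (fun p => ~ plt p (k, i)))
  (fun p => match p with inl q => exist _ (k, proj1_sig q) (@suf_pf1 _ y ga k i q)
                       | inr q => exist _ (proj1_sig q.1, q.2) (@suf_pf2 _ y ga k i q) end)).
- case=> [i1|[a i1]] [i2|[b i2]] //= h.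
  + by right.
  + by left; exact: (proj2_sig b).
  + case: h => [h|[/= h1 h2]]; [by left|right; split => //=; by rewrite h1].
- move=> [[k' i'] h].
  case: (plt_total k' k) => [h1|[h1|h1]].
  + by case: h; left.
  + subst; have h2 : ~ plt i' i by move=> h2; apply: h; right.
    exists (inl (exist _ i' h2)); exact: sig_eq.
  + exists (inr (exist _ k' h1, i')); exact: sig_eq.
- by case.
Qed.

Lemma ord_one_letter (ga : tordinal) (k : pos ga) : letter_word (letter k) = ord_one.
Proof. by rewrite /ord_one (unit_eq (letter k) tt). Qed.

Lemma ord_split3 (ga : tordinal) (k : pos ga) :
  word_iso ga (ord_add (sub ga (fun k' => plt k' k)) (ord_add ord_one (sub ga (fun k' => plt k k')))).
Proof. by rewrite {1}(split3 k) ord_one_letter. Qed.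

Lemma plevi A (y P S : word A) (ga : tordinal) : word_iso (word_pow y ga) (word_cat P S) ->
  exists g1 g2,
    (word_iso ga (ord_add g1 g2) /\ word_iso P (word_pow y g1) /\ word_iso S (word_pow y g2)) \/
    (exists p s, word_iso y (word_cat p s) /\ nonempty p /\ nonempty s /\
       word_iso ga (ord_add g1 (ord_add ord_one g2)) /\
       word_iso P (word_cat (word_pow y g1) p) /\ word_iso S (word_cat s (word_pow y g2))).
Proof.
move=> H.
case: (classic (nonempty S)) => hS; last first.
  exists ga, (empty_word unit); left; split; [|split].
  - by rewrite /ord_add cat_empty_r //; case.
  - by rewrite H cat_empty_r.
  - rewrite (iso_empty hS) (iso_empty (@pow_empty _ y (empty_word unit) _)) //; by case.
case: (iso_maps H) => f [g [gf [fg [m [l m']]]]].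
pose X := word_pow y ga.
have cD : cut (fun x : pos X => isl (f x)).
  move=> a b h hb; apply: (@isl_cut _ P S _ (f b)) => //; by rewrite -m.
case: hS => s0.
have [q [hq mq]] : exists q : pos X, ~ isl (f q) /\ forall x, ~ isl (f x) -> ple q x.
  apply: wf_min; exists (g (inr s0)); rewrite fg; by move=> [z].
have eD : forall x, isl (f x) <-> plt x q.
  move=> x; split => h.
  - case: (plt_total x q) => [h'|[h'|h']] //; first by subst.
    by case: hq; apply: cD h' h.
  - apply: NNPP => nd; case: (mq _ nd) => h'.
    + by have := plt_trans h h' => /plt_irr.
    + by subst; move: h => /plt_irr.
have l' : forall j, letter (g j) = letter j by move=> j; rewrite -{2}(fg j) l.
have T := sub_transport fg gf m' l'.
have HP : word_iso P (sub X (fun x => plt x q)).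
  apply: (iso_trans (iso_sym (@sub_inl _ P S (fun _ => True) (fun _ => I)))).
  rewrite T; apply: sub_ext => x; rewrite -eD; split; by [case|].
have HS : word_iso S (sub X (fun x => ~ plt x q)).
  apply: (iso_trans (iso_sym (@sub_inr _ P S (fun _ => True) (fun _ => I)))).
  rewrite T; apply: sub_ext => x; rewrite -eD; split; by [case|].
case: q {hq mq eD HP HS} (HP) (HS) => k i HP HS.
rewrite pow_prefix in HP; rewrite pow_suffix in HS.
case: (classic (nonempty (sub y (fun i' => plt i' i)))) => hp.
- exists (sub ga (fun k' => plt k' k)), (sub ga (fun k' => plt k k')); right.
  exists (sub y (fun i' => plt i' i)), (sub y (fun i' => ~ plt i' i)); split; [|split => //; split; [|split; [|split]]] => //.
  + rewrite -{1}(sub_T (fun _ : pos y => I)) (@cutg _ y _ _ (@plt_cut _ y i)).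
    by apply: cat_iso; apply: sub_ext => j; split => [[]|] //.
  + by constructor; exists i; apply: plt_irr.
  + exact: ord_split3.
- exists (sub ga (fun k' => plt k' k)), (ord_add ord_one (sub ga (fun k' => plt k k'))); left.
  split; [|split].
  + exact: ord_split3.
  + by rewrite HP cat_empty_r.
  + rewrite HS pow_add pow_one; apply: cat_iso => //.
    apply: sub_T => j hj; apply: hp; constructor; by exists j.
Qed.

Lemma ne_split A (x : word A) : nonempty x -> exists a x', word_iso x (word_cat (letter_word a) x').
Proof.
move=> hx.
have [k0 [_ mk]] : exists k0 : pos x, True /\ forall j, True -> ple k0 j.
  by apply: wf_min; case: hx => i; exists i.
exists (letter k0), (sub x (fun k' => plt k0 k')).
rewrite {1}(split3 k0) cat_empty_l //.
move=> [[j hj]]; case: (mk j I) => h.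
- by have := plt_trans hj h => /plt_irr.
- by subst; move: hj => /plt_irr.
Qed.

Lemma ord_split (al : tordinal) : nonempty al -> exists al', word_iso al (ord_add ord_one al').
Proof.
move=> /ne_split [a [x' h]]; exists x'.
by rewrite h /ord_one (unit_eq a tt).
Qed.

Definition tord_of A (v : word A) : tordinal.
Proof.
refine (@Word unit (pos v) (@plt _ v) (@plt_irr _ v) (@plt_trans _ v) (@plt_total _ v) (@plt_wf _ v)
  (@pos_countable _ v) (fun _ => tt)).
Defined.

Definition bigord A (v : word A) : tordinal := ord_add (tord_of v) ord_one.

Lemma size_lemma A (u v z : word A) : nonempty u ->
  word_iso v (word_cat (word_pow u (bigord v)) z) -> False.
Proof.
move=> [u0] H.
case: (iso_maps H) => f [g [gf [fg [m [l m']]]]].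
pose h (k : pos (bigord v)) : pos (bigord v) := inl (g (inl (k, u0))).
have hm : forall a b, plt a b -> plt (h a) (h b).
  move=> a b hab; rewrite /h /=; rewrite -m'; by left.
have := @selfmap _ _ _ hm (inr tt); apply; by [].
Qed.

Lemma prime_ne d (A : orderType d) (u : word A) : prime_word u -> nonempty u.
Proof.
move=> [hp _]; apply: NNPP => hu.
have H : word_iso u (word_pow u (empty_word unit)).
  rewrite (iso_empty (@pow_empty _ u (empty_word unit) _)) ?(iso_empty hu) //; by case.
case: (hp _ _ H) => h _.
by move: ne_one; rewrite -h; case.
Qed.

Lemma P1 d (A : orderType d) (u P S : word A) : prime_word u ->
  word_iso u (word_cat P S) -> nonempty P -> nonempty S -> str_lt u S \/ word_iso S u.
Proof.
move=> [_ hs] H hP hS.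
case: (hs S) => [|[z hz]|h]; [by exists P| |by left].
right; case: (classic (nonempty z)) => hz'.
  by exfalso; apply: (@no_absorb _ u P z _ hz'); rewrite {1}H hz.
by rewrite hz cat_empty_r.
Qed.

Lemma pow_split1 A (x : word A) al : nonempty al ->
  exists al', word_iso (word_pow x al) (word_cat x (word_pow x al')).
Proof.
move=> /ord_split [al' h]; exists al'.
by rewrite h pow_add pow_one.
Qed.

Lemma GX d (A : orderType d) (u t0 T W : word A) rho :
  str_lt u t0 -> nonempty rho -> str_lt (word_cat (word_pow u rho) T) (word_cat t0 W).
Proof.
move=> h /(pow_split1 u) [r' E]; rewrite E cat_assoc; exact: slt_catr.
Qed.

Lemma tailpre A (y : word A) ga g1 g2 :
  word_iso ga (ord_add g1 g2) -> pre (word_pow y g2) (word_pow y ga).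
Proof.
move=> E; case: (tri_ord g2 ga) => [[r hr]|[r hr]].
- by exists (word_pow y r); rewrite hr pow_add.
- have H : word_iso g2 (ord_add g1 (ord_add g2 r)).
    by rewrite {1}hr E /ord_add cat_assoc.
  case: (classic (nonempty r)) => hn; first by case: (no_absorb H hn).
  have -> : word_iso g2 ga by rewrite hr /ord_add cat_empty_r.
  exact: pre_refl.
Qed.

Lemma pow_cat2 A (u T : word A) a b :
  word_iso (word_cat (word_pow u a) (word_cat (word_pow u b) T)) (word_cat (word_pow u (ord_add a b)) T).
Proof. by rewrite pow_add cat_assoc. Qed.

Lemma decompose d (A : orderType d) (u v : word A) : prime_word u -> prime_word v -> lex_le u v ->
  ~ word_iso u v -> exists mu t0, word_iso v (word_cat (word_pow u mu) t0) /\ str_lt u t0.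
Proof.
move=> hu hv huv Euv.
have nu := prime_ne hu; have nv := prime_ne hv.
pose W := word_pow u (bigord v).
case: (tri v W) => [[z hz]|[[z hz]|[Y [Z [Z' [a [b [hab [h1 h2]]]]]]]]].
-
  case: (plevi hz) => g1 [g2 [[E1 [E2 E3]]|[p [s [E1 [np [ns [E2 [E3 E4]]]]]]]]].
  + by case: ((proj1 hv) _ _ E2) => _ h; case: (Euv h).
  + exfalso.
    case: (classic (nonempty g1)) => ng1.
    * have hpu : pre p u by exists s.
      have huv' : pre u v.
        case: (pow_split1 u ng1) => g' E; exists (word_cat (word_pow u g') p).
        by rewrite E3 E cat_assoc.
      case: (P1 hv E3 (ne_pow nu ng1) np) => [h|h].
      -- exact: (slt_pre1 h (pre_trans hpu huv')).
      -- have Eup : word_iso u p by apply: pre_antisym; [rewrite h|].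
         apply: (@no_absorb1 _ u s _ ns); by rewrite {1}E1 Eup.
    * have Evp : word_iso v p by rewrite E3 cat_empty_l //; apply: pow_empty.
      have hvu : pre v u by exists s; rewrite Evp.
      case: huv => [h|h].
      -- by apply: Euv; apply: pre_antisym.
      -- exact: (slt_pre1 h hvu).
-
  by case: (size_lemma nu hz).
-
  have [g1 [p [r [F1 F2]]]] : exists g1 p r, word_iso Y (word_cat (word_pow u g1) p) /\
      word_iso u (word_cat p (word_cat (letter_word b) r)).
    case: (plevi h2) => g1 [g2 [[E1 [E2 E3]]|[p [s [E1 [np [ns [E2 [E3 E4]]]]]]]]].
    + have ng2 : nonempty g2.
        have : nonempty (word_pow u g2) by rewrite -E3; apply: ne_catl; exact: ne_letter.
        by case/ne_pow_inv.
      case: (pow_split1 u ng2) => g2' E.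
      rewrite E in E3.
      case: (first_letter_gen E3 nu) => M' hM.
      exists g1, (empty_word A), M'; split.
      * by rewrite E2 cat_empty_r //; case.
      * by rewrite cat_empty_l //; case.
    + case: (first_letter_gen E4 ns) => M' hM.
      exists g1, p, M'; split => //.
      by rewrite E1 hM.
  have Ev : word_iso v (word_cat (word_pow u g1) (word_cat p (word_cat (letter_word a) Z))).
    by rewrite h1 F1 cat_assoc.
  case: (ltgtP a b) => hab'; last by case: hab.
  + exfalso.
    case: (classic (nonempty g1)) => ng1.
    * have ns' : nonempty (word_cat p (word_cat (letter_word a) Z)).
        by apply: ne_catr; apply: ne_catl; exact: ne_letter.
      have hlt : str_lt (word_cat p (word_cat (letter_word a) Z)) v.
        case: (pow_split1 u ng1) => g' E.
        rewrite Ev E F2 !cat_assoc; exact: slt_letters.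
      case: (P1 hv Ev (ne_pow nu ng1) ns') => h.
      -- exact: slt_irr (slt_trans h hlt).
      -- by move: hlt; rewrite h; apply: slt_irr.
    * have hlt : str_lt v u.
        rewrite Ev cat_empty_l; last by apply: pow_empty.
        rewrite F2; exact: slt_letters.
      case: huv => h.
      -- exact: (slt_pre1 hlt h).
      -- exact: slt_irr (slt_trans h hlt).
  + exists g1, (word_cat p (word_cat (letter_word a) Z)); split => //.
    rewrite F2; exact: slt_letters.
Qed.

Lemma main_nonabs d (A : orderType d) (u v t0 : word A) (al be mu rho : tordinal) :
  prime_word u -> prime_word v -> nonempty al -> nonempty be ->
  word_iso v (word_cat (word_pow u mu) t0) -> str_lt u t0 ->
  word_iso (ord_add al mu) (ord_add mu rho) -> nonempty rho ->
  prime_word (word_cat (word_pow u al) (word_pow v be)).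
Proof.
move=> hu hv hal hbe hvd ht0 hN hrho.
have nu := prime_ne hu; have nv := prime_ne hv.
have [R ER] : exists R, word_iso (word_pow v be) (word_cat v R).
  case: (ord_split hbe) => be' E; exists (word_pow v be'); by rewrite E pow_add pow_one.
have ER2 : word_iso (word_pow v be) (word_cat (word_pow u mu) (word_cat t0 R)).
  by rewrite ER {1}hvd cat_assoc.
set X := word_cat (word_pow u al) (word_pow v be).
set N := ord_add al mu.
have HX : word_iso X (word_cat (word_pow u N) (word_cat t0 R)).
  by rewrite /X ER2 pow_cat2.
have HX2 : word_iso X (word_cat (word_pow u mu) (word_cat (word_pow u rho) (word_cat t0 R))).
  by rewrite HX /N hN pow_add cat_assoc.
have nX : nonempty X by apply: ne_catl; apply: ne_pow.
have Fxv : forall W, str_lt X (word_cat v W).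
  move=> W; rewrite HX2 hvd cat_assoc; apply: slt_catl; exact: GX.
have Fxv0 : str_lt X v.
  by have := Fxv (empty_word A); rewrite cat_empty_r //; case.
have Fxbe : str_lt X (word_pow v be) by rewrite ER; exact: Fxv.
have CASEA : forall g1 g3 S, word_iso al (ord_add g1 g3) ->
    word_iso S (word_cat (word_pow u g3) (word_pow v be)) -> str_lt X S \/ word_iso S X.
  move=> g1 g3 S E1 E2.
  have HS : word_iso S (word_cat (word_pow u (ord_add g3 mu)) (word_cat t0 R)).
    by rewrite E2 ER2 pow_cat2.
  case: (tri_ord (ord_add g3 mu) N) => [[r hr]|[r hr]].
  - case: (classic (nonempty r)) => hr'.
    + left; rewrite HS HX hr (@pow_add _ u (ord_add g3 mu) r) cat_assoc; apply: slt_catl; exact: GX.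
    + right; by rewrite HS HX hr (@cat_empty_r _ (ord_add g3 mu) r hr').
  - right.
    have H : word_iso (ord_add g3 mu) (ord_add g1 (ord_add (ord_add g3 mu) r)).
      by rewrite {1}hr /N E1 /ord_add !cat_assoc.
    case: (classic (nonempty r)) => hr'; first by case: (no_absorb H hr').
    by rewrite HS HX hr (@cat_empty_r _ N r hr').
have SUF : forall P S, word_iso X (word_cat P S) -> nonempty P -> nonempty S ->
    str_lt X S \/ word_iso S X.
  move=> P S H nP nS.
  case: (levi H) => M [[k1 k2]|[k1 k2]].
  - case: (classic (nonempty M)) => nM; last first.
      by left; rewrite -(cat_empty_l S nM) -k2.
    case: (plevi k2) => g1 [g2 [[E1 [E2 E3]]|[p [s [E1 [np [ns [E2 [E3 E4]]]]]]]]].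
    + have ng2 : nonempty g2 by move: nS; rewrite E3 => /ne_pow_inv [].
      case: (pow_split1 v ng2) => g' E; left; rewrite E3 E; exact: Fxv.
    + case: (P1 hv E1 np ns) => h.
      * left; rewrite E4; apply: slt_catr0; exact: slt_trans Fxv0 h.
      * left; rewrite E4 h; exact: Fxv.
  - case: (classic (nonempty M)) => nM; last first.
      by left; rewrite k2 cat_empty_l.
    case: (plevi k1) => g1 [g2 [[E1 [E2 E3]]|[p [s [E1 [np [ns [E2 [E3 E4]]]]]]]]].
    + apply: (CASEA g1 g2 S E1); by rewrite k2 E3.
    + case: (P1 hu E1 np ns) => h.
      * left; case: (pow_split1 u hal) => al' Eal.
        rewrite k2 E4 /X Eal cat_assoc cat_assoc; exact: slt_catr.
      * apply: (CASEA g1 (ord_add ord_one g2) S E2).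
        by rewrite k2 E4 h pow_add pow_one cat_assoc.
have PRIM : forall y ga, word_iso X (word_pow y ga) -> word_iso ga ord_one /\ word_iso y X.
  move=> y ga H.
  have H' : word_iso (word_pow y ga) (word_cat (word_pow u al) (word_pow v be)) by rewrite -H.
  case: (plevi H') => g1 [g2 [[E1 [E2 E3]]|[p [s [E1 [np [ns [E2 [E3 E4]]]]]]]]].
  - exfalso; apply: (slt_pre1 Fxbe).
    rewrite E3 H; exact: tailpre E1.
  - have ny : nonempty y by rewrite E1; apply: ne_catl.
    case: (classic (nonempty g2)) => ng2.
    + have T : pre (word_pow y g2) X.
        rewrite H; apply: (@tailpre _ _ _ (ord_add g1 ord_one)).
        by rewrite E2 /ord_add cat_assoc.
      have HX3 : word_iso X (word_cat (word_pow y (ord_add g1 ord_one)) (word_pow y g2)).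
        by rewrite H E2 -pow_add /ord_add cat_assoc.
      case: (SUF _ _ HX3 (ne_pow ny (ne_catr _ ne_one)) (ne_pow ny ng2)) => h.
        by case: (slt_pre1 h T).
      rewrite h in E4.
      exfalso.
      case: (plevi E4) => h1 [h2 [[F1 [F2 F3]]|[p' [s' [F1 [np' [ns' [F2 [F3 F4]]]]]]]]].
      * have nh2 : nonempty h2 by move: nX; rewrite F3 => /ne_pow_inv [].
        case: (pow_split1 v nh2) => h' E.
        apply: (slt_pre1 Fxv0); exists (word_pow v h'); by rewrite F3 E.
      * case: (P1 hv F1 np' ns') => h3.
        -- have : str_lt X X by rewrite {2}F4; apply: slt_catr0; exact: slt_trans Fxv0 h3.
           exact: slt_irr.
        -- apply: (slt_pre1 Fxv0); exists (word_pow v h2); by rewrite F4 h3.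
    + have Ega : word_iso ga (ord_add g1 ord_one).
        by rewrite E2 /ord_add (@cat_empty_r _ ord_one g2 ng2).
      case: (classic (nonempty g1)) => ng1.
      * exfalso.
        have HX3 : word_iso X (word_cat (word_pow y g1) y).
          by rewrite H Ega pow_add pow_one.
        case: (SUF _ _ HX3 (ne_pow ny ng1) ny) => h.
        -- apply: (slt_pre1 h).
           case: (pow_split1 y ng1) => g' E.
           exists (word_cat (word_pow y g') y); by rewrite HX3 E cat_assoc.
        -- case: (pow_split1 y ng1) => g' E.
           apply: (@no_absorb1 _ X (word_cat (word_pow y g') y)).
             by rewrite {1}HX3 E cat_assoc h.
           by apply: ne_catr.
      * have Ega1 : word_iso ga ord_one by rewrite Ega /ord_add cat_empty_l.
        by split => //; rewrite H Ega1 pow_one.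
split => // S [P [nP [nS H]]].
case: (SUF _ _ H nP nS) => h; [by right|left].
by exists (empty_word A); rewrite h cat_empty_r //; case.
Qed.

Local Close Scope order_scope.

Theorem mainTheorem15 (d : Order.disp_t) (A : finOrderType d)
    (u v : word A) (al be : tordinal) :
  prime_word u -> prime_word v -> lex_le u v ->
  nonempty al -> nonempty be ->
  exists (w : word A) (ga : tordinal),
    prime_word w /\
    word_iso (word_cat (word_pow u al) (word_pow v be)) (word_pow w ga) /\
    ((word_iso w v /\ (word_iso ga be \/ word_iso ga (ord_add al be))) \/
     (word_iso w (word_cat (word_pow u al) (word_pow v be)) /\
      word_iso ga ord_one)).
Proof.
move=> hu hv huv hal hbe.
case: (classic (word_iso u v)) => Euv.
  exists v, (ord_add al be); split => //; split.
    by rewrite Euv pow_add.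
  by left; split => //; right.
case: (decompose hu hv huv Euv) => mu [t0 [hvd ht0]].
have [R ER] : exists R, word_iso (word_pow v be) (word_cat v R).
  case: (ord_split hbe) => be' E; exists (word_pow v be'); by rewrite E pow_add pow_one.
have Abs : word_iso (ord_add al mu) mu ->
  word_iso (word_cat (word_pow u al) (word_pow v be)) (word_pow v be).
  move=> E.
  have ER2 : word_iso (word_pow v be) (word_cat (word_pow u mu) (word_cat t0 R)).
    by rewrite ER {1}hvd cat_assoc.
  by rewrite {1}ER2 pow_cat2 E -ER2.
have AbsG : word_iso (ord_add al mu) mu -> exists (w : word A) (ga : tordinal),
    prime_word w /\
    word_iso (word_cat (word_pow u al) (word_pow v be)) (word_pow w ga) /\
    ((word_iso w v /\ (word_iso ga be \/ word_iso ga (ord_add al be))) \/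
     (word_iso w (word_cat (word_pow u al) (word_pow v be)) /\
      word_iso ga ord_one)).
  move=> E; exists v, be; split => //; split; first exact: Abs.
  by left; split => //; left.
case: (tri_ord mu (ord_add al mu)) => [[r hr]|[r hr]].
- case: (classic (nonempty r)) => hr'; last first.
    by apply: AbsG; rewrite hr /ord_add cat_empty_r.
  exists (word_cat (word_pow u al) (word_pow v be)), ord_one.
  split; first exact: (main_nonabs hu hv hal hbe hvd ht0 hr hr').
  split; first by rewrite pow_one.
  by right.
- apply: AbsG.
  have H : word_iso mu (ord_add al (ord_add mu r)) by rewrite {1}hr /ord_add cat_assoc.
  case: (classic (nonempty r)) => hr'; first by case: (no_absorb H hr').
  exact: iso_trans (iso_sym (@cat_empty_r _ (ord_add al mu) r hr')) (iso_sym hr).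
Qed.
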